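(* Let $n>3$ and $k,m\geq2$ with $k+m=n+1$. Write $\mathbb{R}^{n+1}\equiv\mathbb{C}\times\mathbb{R}^{k-2}\times\mathbb{C}\times\mathbb{R}^{m-2}$ with points $(z_1,x_1,z_2,x_2)$, and let $O(k)\times O(m)$ act on $\mathbb{R}^{n+1}$ with $O(k)$ acting on the first factor $\mathbb{C}\times\mathbb{R}^{k-2}\equiv\mathbb{R}^k$ and $O(m)$ on the second factor $\mathbb{C}\times\mathbb{R}^{m-2}\equiv\mathbb{R}^m$. If $u:\mathbb{S}^n\to\mathbb{R}$ is $[O(k)\times O(m)]$-invariant and $$u(z_1,x_1,z_2,x_2)=-u(-\bar z_2,x_1,\bar z_1,x_2)\qquad\text{for all }(z_1,x_1,z_2,x_2),$$ then $u\equiv0$.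
   Context: $\mathbb{S}^n$ is the unit sphere in $\mathbb{R}^{n+1}$; $u$ being $[O(k)\times O(m)]$-invariant means $u(\gamma y)=u(y)$ for all $\gamma\in O(k)\times O(m)$ and $y\in\mathbb{S}^n$. *)

(* Defs.v *)
From HB Require Import structures.
From mathcomp Require Import all_boot all_order all_algebra.
From mathcomp Require Import reals.
Set Implicit Arguments. Unset Strict Implicit. Unset Printing Implicit Defensive.
Import Order.TTheory GRing.Theory Num.Theory.
Local Open Scope ring_scope.

Definition on_sphere (R : realType) N (y : 'rV[R]_N) : Prop :=
  \sum_(i < N) y 0 i ^+ 2 = 1.

Definition orthogonal_mx (R : realType) p (A : 'M[R]_p) : Prop :=
  A *m A^T = 1%:M.

Definition OkOm_act (R : realType) k m (A : 'M[R]_k) (B : 'M[R]_m)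
  (y : 'rV[R]_(k + m)) : 'rV[R]_(k + m) :=
  row_mx (lsubmx y *m A) (rsubmx y *m B).

Definition OkOm_invariant (R : realType) k m (u : 'rV[R]_(k + m) -> R) : Prop :=
  forall (A : 'M[R]_k) (B : 'M[R]_m) (y : 'rV[R]_(k + m)),
    orthogonal_mx A -> orthogonal_mx B -> on_sphere y ->
    u (OkOm_act A B y) = u y.

(* j-th coordinate (0-based) of y, or 0 if out of range. *)
Definition coord_of (R : realType) N (y : 'rV[R]_N) (j : nat) : R :=
  if insub j is Some i then y 0 i else 0.

(* Coordinates of R^(k+m) = C x R^(k-2) x C x R^(m-2):
   z1 = y_0 + i y_1, x1 = (y_2..y_(k-1)), z2 = y_k + i y_(k+1),
   x2 = (y_(k+2)..y_(k+m-1)).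
   sigma (z1,x1,z2,x2) = (-conj z2, x1, conj z1, x2), i.e.
   -conj z2 = -y_k + i y_(k+1)  and  conj z1 = y_0 - i y_1. *)
Definition sigma_map (R : realType) k m (y : 'rV[R]_(k + m)) : 'rV[R]_(k + m) :=
  \row_(i < k + m)
    (if val i == 0%N then - coord_of y k
     else if val i == 1%N then coord_of y k.+1
     else if val i == k then coord_of y 0
     else if val i == k.+1 then - coord_of y 1
     else y 0 i).

(* Main.v *)
Require Import Defs.
From HB Require Import structures.
From mathcomp Require Import all_boot all_order all_algebra.
From mathcomp Require Import reals.
From mathcomp Require Import ring lra zify.
Import Order.TTheory GRing.Theory Num.Theory.
Set Implicit Arguments. Unset Strict Implicit. Unset Printing Implicit Defensive.
Local Open Scope ring_scope.

Section S.
Variable R : realType.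

Definition dot p (x y : 'rV[R]_p) : R := (x *m y^T) 0 0.

Lemma dotC p (x y : 'rV[R]_p) : dot x y = dot y x.
Proof. rewrite /dot. have -> : (x *m y^T) 0 0 = ((x *m y^T)^T) 0 0 by rewrite [RHS]mxE.
by rewrite trmx_mul trmxK. Qed.

Lemma dotBr p (x y z : 'rV[R]_p) : dot x (y - z) = dot x y - dot x z.
Proof. by rewrite /dot raddfB /= mulmxBr !mxE. Qed.

Lemma dotBl p (x y z : 'rV[R]_p) : dot (y - z) x = dot y x - dot z x.
Proof. by rewrite /dot mulmxBl !mxE. Qed.

Lemma dotE p (x : 'rV[R]_p) : dot x x = \sum_(j < p) x 0 j ^+ 2.
Proof. rewrite /dot mxE; apply: eq_bigr => j _; by rewrite !mxE expr2. Qed.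

Lemma dot_mx p (x y : 'rV[R]_p) : x *m y^T = (dot x y)%:M.
Proof. exact: mx11_scalar. Qed.

Lemma householder p (v w : 'rV[R]_p) : dot v v = dot w w ->
  exists A : 'M[R]_p, orthogonal_mx A /\ v *m A = w.
Proof.
move=> hvw.
have [->|ne] := eqVneq v w.
  by exists 1%:M; split; rewrite ?mulmx1 // /orthogonal_mx trmx1 mulmx1.
set d := v - w.
have hc : dot d d != 0.
  rewrite dotE psumr_eq0; last by move=> j _; rewrite sqr_ge0.
  apply/negP => /allP H; move: ne; rewrite -subr_eq0 -/d => /negP; apply.
  apply/eqP/rowP => j; rewrite [RHS]mxE.
  by move: (H j (mem_index_enum j)); rewrite sqrf_eq0 => /eqP.
set c := dot d d.
have hc2 : c = 2 * (dot v v - dot v w).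
  rewrite /c /d !dotBr !dotBl (dotC w v) -hvw; ring.
set s := 2 / c.
set D := d^T *m d.
have DT : D^T = D by rewrite /D trmx_mul trmxK.
have DD : D *m D = c *: D.
  by rewrite /D mulmxA -(mulmxA d^T) dot_mx mul_mx_scalar scalemxAl.
exists (1%:M - s *: D); split.
  have ST : (s *: D)^T = s *: D^T.
    by apply/matrixP => i j; rewrite !mxE.
  rewrite /orthogonal_mx linearB /= ST DT trmx1.
  rewrite mulmxBl mulmxBr mulmxBr !mul1mx !mulmx1 -!scalemxAl -!scalemxAr DD !scalerA.
  have -> : s * s * c = s + s by rewrite /s; field.
  by rewrite scalerDl opprB addrK subrK.
rewrite mulmxBr mulmx1 -scalemxAr /D mulmxA dot_mx mul_scalar_mx scalerA.
have -> : s * dot v d = 1.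
  rewrite /s hc2 /d dotBr; field; by move: hc; rewrite -/c hc2 mulf_eq0 negb_or => /andP[].
by rewrite scale1r /d opprB addrC subrK.
Qed.

Lemma coord_ofE N (y : 'rV[R]_N) j (h : (j < N)%N) : coord_of y j = y 0 (Ordinal h).
Proof. by rewrite /coord_of insubT. Qed.

Definition vec2 N (i1 i2 : nat) (x1 x2 : R) : 'rV[R]_N :=
  \row_(i < N) (if val i == i1 then x1 else if val i == i2 then x2 else 0).

Lemma sum_ind N (c : nat) (x : R) : \sum_(i < N) (if val i == c then x else 0) = if (c < N)%N then x else 0.
Proof.
case: ltnP => h.
  rewrite (bigD1 (Ordinal h)) //= eqxx big1 ?addr0 // => i /eqP ne.
  case: eqP => // e; exfalso; apply: ne; exact: val_inj.
apply: big1 => i _; case: eqP => // e; by move: h; rewrite -e leqNgt ltn_ord.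
Qed.

Lemma vec2_sq N i1 i2 x1 x2 (i : 'I_N) : i1 != i2 ->
  ((vec2 N i1 i2 x1 x2) 0 i) ^+ 2 =
  (if val i == i1 then x1 ^+ 2 else 0) + (if val i == i2 then x2 ^+ 2 else 0).
Proof.
move=> ne; rewrite mxE; case: eqP => [->|_]; first by rewrite (negbTE ne) addr0.
by case: eqP => _; rewrite ?add0r // expr0n.
Qed.

Lemma vec2_sphere N i1 i2 x1 x2 : i1 != i2 -> (i1 < N)%N -> (i2 < N)%N ->
  on_sphere (vec2 N i1 i2 x1 x2) <-> x1 ^+ 2 + x2 ^+ 2 = 1.
Proof.
move=> ne h1 h2; rewrite /on_sphere.
under eq_bigr => i _ do rewrite vec2_sq //.
by rewrite big_split /= !sum_ind h1 h2.
Qed.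

Definition N1 k m (y : 'rV[R]_(k + m)) := \sum_(j < k) y 0 (lshift m j) ^+ 2.
Definition N2 k m (y : 'rV[R]_(k + m)) := \sum_(j < m) y 0 (rshift k j) ^+ 2.

Lemma vec2_N1 k m i1 i2 x1 x2 : i1 != i2 ->
  N1 (vec2 (k + m) i1 i2 x1 x2) =
  (if (i1 < k)%N then x1 ^+ 2 else 0) + (if (i2 < k)%N then x2 ^+ 2 else 0).
Proof.
move=> ne; rewrite /N1.
under eq_bigr => i _ do rewrite vec2_sq //=.
by rewrite big_split /= !sum_ind.
Qed.

Lemma sphere_split k m (y : 'rV[R]_(k + m)) : on_sphere y -> N1 y + N2 y = 1.
Proof. by rewrite /on_sphere big_split_ord. Qed.

Lemma N1_ge0 k m (y : 'rV[R]_(k + m)) : 0 <= N1 y.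
Proof. by apply: sumr_ge0 => i _; rewrite sqr_ge0. Qed.
Lemma N2_ge0 k m (y : 'rV[R]_(k + m)) : 0 <= N2 y.
Proof. by apply: sumr_ge0 => i _; rewrite sqr_ge0. Qed.

Lemma inv_N1 k m (u : 'rV[R]_(k + m) -> R) : OkOm_invariant u ->
  forall y y', on_sphere y -> on_sphere y' -> N1 y = N1 y' -> u y = u y'.
Proof.
move=> hinv y y' hy hy' e.
have e2 : N2 y = N2 y'.
  have s1 := sphere_split hy; have s2 := sphere_split hy'; rewrite e in s1.
  by apply: (addrI (N1 y')); rewrite s1 s2.
have [A [oA hA]] : exists A : 'M[R]_k, orthogonal_mx A /\ lsubmx y *m A = lsubmx y'.
  apply: householder; rewrite !dotE.
  have lsE z j : lsubmx z 0 j = z 0 (lshift m j) by rewrite mxE.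
  by under eq_bigr => j _ do rewrite lsE; under [in RHS]eq_bigr => j _ do rewrite lsE.
have [B [oB hB]] : exists B : 'M[R]_m, orthogonal_mx B /\ rsubmx y *m B = rsubmx y'.
  apply: householder; rewrite !dotE.
  have rsE z j : rsubmx z 0 j = z 0 (rshift k j) by rewrite mxE.
  by under eq_bigr => j _ do rewrite rsE; under [in RHS]eq_bigr => j _ do rewrite rsE.
by rewrite -(hinv A B y oA oB hy) /OkOm_act hA hB hsubmxK.
Qed.


Lemma sigA k m (a b : R) : (2 <= k)%N -> (3 <= m)%N ->
  sigma_map (vec2 (k + m) 0 k.+2 a b) = vec2 (k + m) k k.+2 a b.
Proof.
move=> hk hm; apply/rowP => i.
have h0 : (0 < k + m)%N by lia.
have h1 : (1 < k + m)%N by lia.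
have hk0 : (k < k + m)%N by lia.
have hk1 : (k.+1 < k + m)%N by lia.
rewrite !mxE (coord_ofE _ hk0) (coord_ofE _ hk1) (coord_ofE _ h0) (coord_ofE _ h1) !mxE /=.
move: (val i) => t.
repeat (case: eqP => ?); subst; rewrite ?oppr0 //; lia.
Qed.

Lemma sigB k m (a b : R) : (3 <= k)%N -> (2 <= m)%N ->
  sigma_map (vec2 (k + m) 2 k a b) = vec2 (k + m) 2 0 a (- b).
Proof.
move=> hk hm; apply/rowP => i.
have h0 : (0 < k + m)%N by lia.
have h1 : (1 < k + m)%N by lia.
have hk0 : (k < k + m)%N by lia.
have hk1 : (k.+1 < k + m)%N by lia.
rewrite !mxE (coord_ofE _ hk0) (coord_ofE _ hk1) (coord_ofE _ h0) (coord_ofE _ h1) !mxE /=.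
move: (val i) => t.
repeat (case: eqP => ?); subst; rewrite ?oppr0 //; lia.
Qed.
End S.

Theorem proposition4p2 (R : realType) (n k m : nat)
  (hn : (3 < n)%N) (hk : (2 <= k)%N) (hm : (2 <= m)%N) (hkm : (k + m = n + 1)%N)
  (u : 'rV[R]_(k + m) -> R)
  (hinv : OkOm_invariant u)
  (hanti : forall y : 'rV[R]_(k + m), on_sphere y -> u y = - u (sigma_map y)) :
  forall y : 'rV[R]_(k + m), on_sphere y -> u y = 0.
Proof.
move=> y hy.
have s := sphere_split hy.
have g1 := N1_ge0 y; have g2 := N2_ge0 y.
set a := Num.sqrt (N1 y); set b := Num.sqrt (N2 y).
have ha : a ^+ 2 = N1 y by rewrite sqr_sqrtr.
have hb : b ^+ 2 = N2 y by rewrite sqr_sqrtr.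
have hab : a ^+ 2 + b ^+ 2 = 1 by rewrite ha hb.
have inv := inv_N1 hinv.
have z2 : forall x : R, x = - x -> x = 0.
  by move=> x hx; lra.
have [hm3|hm2] := leqP 3 m.
  have ne1 : (0 != k.+2)%N by [].
  have ne2 : (k != k.+2)%N by lia.
  have r0 : (0 < k + m)%N by lia.
  have rk : (k < k + m)%N by lia.
  have rk2 : (k.+2 < k + m)%N by lia.
  have sp x1 x2 : x1 ^+ 2 + x2 ^+ 2 = 1 -> on_sphere (vec2 (k + m) 0 k.+2 x1 x2).
    by move=> h; apply/vec2_sphere.
  have sp' x1 x2 : x1 ^+ 2 + x2 ^+ 2 = 1 -> on_sphere (vec2 (k + m) k k.+2 x1 x2).
    by move=> h; apply/vec2_sphere.
  have e01 : (0 : R) ^+ 2 + 1 ^+ 2 = 1 by rewrite expr0n add0r expr1n.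
  have n1 : (k.+2 < k)%N = false by lia.
  have n0 : (0 < k)%N by lia.
  have q0 : u (vec2 (k + m) 0 k.+2 0 1) = 0.
    apply: z2; rewrite {1}hanti; last exact: sp.
    rewrite (sigA 0 1 hk hm3); congr (- _); apply: inv; [exact: sp'|exact: sp|].
    by rewrite !vec2_N1 // ltnn n1 n0 expr0n addr0.
  rewrite (inv y (vec2 (k + m) 0 k.+2 a b)) //; last first.
    by rewrite vec2_N1 // n1 n0 addr0.
    exact: sp.
  rewrite hanti; last exact: sp.
  rewrite (sigA a b hk hm3).
  have -> : u (vec2 (k+m) k k.+2 a b) = u (vec2 (k+m) 0 k.+2 0 1).
    apply: inv; [exact: sp'|exact: sp|].
    by rewrite !vec2_N1 // ltnn n1 n0 expr0n addr0.
  by rewrite q0 oppr0.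
have hk3 : (3 <= k)%N by lia.
have ne1 : (2 != k)%N by lia.
have ne2 : (2 != 0)%N by [].
have r0 : (0 < k + m)%N by lia.
have rk : (k < k + m)%N by lia.
have r2 : (2 < k + m)%N by lia.
have sp x1 x2 : x1 ^+ 2 + x2 ^+ 2 = 1 -> on_sphere (vec2 (k + m) 2 k x1 x2).
  by move=> h; apply/vec2_sphere.
have sp' x1 x2 : x1 ^+ 2 + x2 ^+ 2 = 1 -> on_sphere (vec2 (k + m) 2 0 x1 x2).
  by move=> h; apply/vec2_sphere.
have e10 : (1 : R) ^+ 2 + 0 ^+ 2 = 1 by rewrite expr0n addr0 expr1n.
have e10' : (1 : R) ^+ 2 + (- 0) ^+ 2 = 1 by rewrite oppr0 expr0n addr0 expr1n.
have hab' : a ^+ 2 + (- b) ^+ 2 = 1 by rewrite sqrrN.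
have n2 : (2 < k)%N by lia.
have n0 : (0 < k)%N by lia.
have q0 : u (vec2 (k + m) 2 k 1 0) = 0.
  apply: z2; rewrite {1}hanti; last exact: sp.
  rewrite (sigB 1 0 hk3 hm); congr (- _); apply: inv; [exact: sp'|exact: sp|].
  by rewrite !vec2_N1 // ltnn n2 n0 oppr0 expr0n.
rewrite (inv y (vec2 (k + m) 2 k a b)) //; last first.
  by rewrite vec2_N1 // ltnn n2 addr0.
  exact: sp.
rewrite hanti; last exact: sp.
rewrite (sigB a b hk3 hm).
have -> : u (vec2 (k+m) 2 0 a (- b)) = u (vec2 (k+m) 2 k 1 0).
  apply: inv; [exact: sp'|exact: sp|].
  by rewrite !vec2_N1 // ltnn n2 n0 sqrrN hab addr0 expr1n.
by rewrite q0 oppr0.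
Qed.
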